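(* Let $n$ be a positive integer and let $i,k\in\{1,\ldots,n\}$. Suppose that $H\sim\text{Hyp}(n,i,k)$ satisfies $\mathbb{E}(H)\in [1,\min\{i,k\}-2]$ and $\frac{(n-i)(n-k)}{n}> 1$. Then \[ \mathbb{P}(H\ge \mathbb{E}(H)) \,\ge\,\frac{e^{-1/8}}{4\sqrt{2}} \cdot \sqrt{\frac{n-1}{n}} \cdot\frac{ \sqrt{\text{Var}(H)} }{1 + \sqrt{1+ \frac{n-1}{n-k}\cdot\text{Var}(H)}}. \]
   Context: $\text{Hyp}(n,i,k)$ denotes the hypergeometric distribution: the number of black marbles in a sample without replacement of size $k$ from an urn with $i$ black and $n-i$ white marbles, i.e. $\mathbb{P}(H=j)=\binom{i}{j}\binom{n-i}{k-j}/\binom{n}{k}$ for $j\in\{\max\{0,k-(n-i)\},\ldots,\min\{k,i\}\}$. One has $\mathbb{E}(H)=ik/n$ and $\text{Var}(H)=k\cdot\frac{i}{n}\cdot\frac{n-i}{n}\cdot\frac{n-k}{n-1}$. *)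

(* Defs.v *)
(* concrete reals R; binomial coefficients from Stdlib Arith are
   avoided because of truncated subtraction, we define our own. *)
From Stdlib Require Import Reals Lra Lia.
Open Scope R_scope.

(* binomial coefficient on nat, with binom a b = 0 when b > a *)
Fixpoint binom (a b : nat) : nat :=
  match a, b with
  | _, O => 1%nat
  | O, S _ => 0%nat
  | S a', S b' => (binom a' b' + binom a' b)%nat
  end.

Definition hyp_pmf (n i k j : nat) : R :=
  if (j <=? k)%nat then
    INR (binom i j) * INR (binom (n - i) (k - j)) / INR (binom n k)
  else 0.

Definition hyp_mean (n i k : nat) : R :=
  sum_f_R0 (fun j => INR j * hyp_pmf n i k j) k.

Definition hyp_var (n i k : nat) : R :=
  sum_f_R0 (fun j => (INR j - hyp_mean n i k) ^ 2 * hyp_pmf n i k j) k.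

Definition hyp_prob_ge_mean (n i k : nat) : R :=
  sum_f_R0 (fun j => if Rle_dec (hyp_mean n i k) (INR j)
                     then hyp_pmf n i k j else 0) k.

(* Main.v *)
Require Import Defs.
From Stdlib Require Import Reals Lra Lia Psatz Arith ZArith.
Open Scope R_scope.

Lemma binom_0_r a : binom a 0 = 1%nat.
Proof. destruct a; reflexivity. Qed.

Lemma binom_gt : forall a b, (a < b)%nat -> binom a b = 0%nat.
Proof.
  induction a; intros b H; destruct b; try lia.
  - reflexivity.
  - cbn [binom]. rewrite !IHa by lia. reflexivity.
Qed.

Lemma binom_pos : forall a b, (b <= a)%nat -> (0 < binom a b)%nat.
Proof.
  induction a; intros b H; destruct b; cbn [binom]; try lia.
  specialize (IHa b ltac:(lia)). lia.
Qed.

Lemma absorb : forall a j,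
  INR (S j) * INR (binom a (S j)) = (INR a - INR j) * INR (binom a j).
Proof.
  induction a; intros j.
  - destruct j; cbn [binom]; simpl; lra.
  - destruct j as [|j].
    + cbn [binom]. rewrite binom_0_r. specialize (IHa 0%nat).
      rewrite binom_0_r in IHa. rewrite plus_INR. rewrite !S_INR in *.
      simpl INR in *. lra.
    + cbn [binom]. rewrite !plus_INR. pose proof (IHa j) as H1.
      pose proof (IHa (S j)) as H2. rewrite !S_INR in *. nra.
Qed.

Lemma sum_only0 : forall (f : nat -> R) N,
  (forall j, (1 <= j)%nat -> f j = 0) -> sum_f_R0 f N = f 0%nat.
Proof.
  intros f N H; induction N; simpl; auto. rewrite IHN, (H (S N)) by lia. ring.
Qed.

Lemma vandermonde : forall a b k,
  sum_f_R0 (fun j => INR (binom a j) * INR (binom b (k - j))) k = INR (binom (a + b) k).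
Proof.
  induction a; intros b k.
  - rewrite sum_only0.
    + cbn [binom]. simpl INR at 1. rewrite Nat.sub_0_r. simpl. ring.
    + intros j Hj. destruct j; [lia|]. cbn [binom]. simpl INR. ring.
  - destruct k as [|k].
    + simpl. rewrite !binom_0_r. simpl. ring.
    + rewrite decomp_sum by lia. simpl pred.
      rewrite binom_0_r, Nat.sub_0_r.
      assert (E: sum_f_R0 (fun j => INR (binom (S a) (S j)) * INR (binom b (S k - S j))) k
               = sum_f_R0 (fun j => INR (binom a j) * INR (binom b (k - j))) k
               + sum_f_R0 (fun j => INR (binom a (S j)) * INR (binom b (k - j))) k).
      { rewrite <- sum_plus. apply sum_eq. intros j _. cbn [binom].
        replace (S k - S j)%nat with (k - j)%nat by lia. rewrite plus_INR. ring. }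
      rewrite E, IHa.
      pose proof (IHa b (S k)) as H2. rewrite decomp_sum in H2 by lia. simpl pred in H2.
      rewrite binom_0_r, Nat.sub_0_r in H2.
      replace (S a + b)%nat with (S (a + b)) by lia. cbn [binom]. rewrite plus_INR.
      simpl INR at 1. simpl INR in H2 at 1.
      assert (H3: sum_f_R0 (fun i => INR (binom a (S i)) * INR (binom b (S k - S i))) k
        = sum_f_R0 (fun j => INR (binom a (S j)) * INR (binom b (k - j))) k).
      { apply sum_eq. intros j _. replace (S k - S j)%nat with (k - j)%nat by lia. ring. }
      rewrite H3 in H2. lra.
Qed.
Definition tl (N j : nat) (f : nat -> R) : R :=
  sum_f_R0 (fun l => if (j <=? l)%nat then f l else 0) N.

Lemma tl_step N j f : tl N j f = (if (j <=? N)%nat then f j else 0) + tl N (S j) f.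
Proof.
  unfold tl. induction N.
  - simpl. destruct j; simpl; ring.
  - simpl sum_f_R0. rewrite IHN.
    simpl Nat.leb.
    destruct (Nat.leb_spec j N); destruct (Nat.leb_spec j (S N)); try lia; try ring.
    assert (j = S N) by lia. subst. ring.
Qed.

Lemma tl_zero N j f : (N < j)%nat -> tl N j f = 0.
Proof.
  unfold tl. intros H. induction N; simpl.
  - rewrite (proj2 (Nat.leb_gt j 0) H). reflexivity.
  - rewrite IHN by lia. rewrite (proj2 (Nat.leb_gt j (S N)) H). ring.
Qed.

Lemma tl_0 N f : tl N 0 f = sum_f_R0 f N.
Proof. unfold tl. apply sum_eq. intros. reflexivity. Qed.

Lemma tl_ext N j f g : (forall l, f l = g l) -> tl N j f = tl N j g.
Proof. intros H. unfold tl. apply sum_eq. intros l _. rewrite H. reflexivity. Qed.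

Lemma tl_lin N j f g h a b c :
  tl N j (fun l => a * f l + b * g l + c * h l) = a * tl N j f + b * tl N j g + c * tl N j h.
Proof.
  unfold tl. induction N; simpl.
  - destruct (j <=? 0)%nat; ring.
  - rewrite IHN. destruct (j <=? S N)%nat; ring.
Qed.

Lemma tl_nonneg N j f : (forall l, 0 <= f l) -> 0 <= tl N j f.
Proof.
  intros H. unfold tl. induction N; simpl.
  - destruct (j <=? 0)%nat; [apply H|lra].
  - destruct (j <=? S N)%nat; [specialize (H (S N))|]; lra.
Qed.

Lemma down_ind (N : nat) (P : nat -> Prop) :
  (forall j, (N < j)%nat -> P j) -> (forall j, (j <= N)%nat -> P (S j) -> P j) -> forall j, P j.
Proof.
  intros Hb Hs.
  assert (H: forall d j, (j + d = S N)%nat -> P j).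
  { induction d; intros j Hj. apply Hb; lia. apply Hs; [lia|]. apply IHd; lia. }
  intros j. destruct (le_lt_dec j N). apply (H (S N - j)%nat j); lia. apply Hb; lia.
Qed.

Lemma binom_n_k_pos n k : (k <= n)%nat -> 0 < INR (binom n k).
Proof. intros. apply lt_0_INR. apply binom_pos. auto. Qed.

Lemma pmf_nonneg n i k j : (k <= n)%nat -> 0 <= hyp_pmf n i k j.
Proof.
  intros Hk. unfold hyp_pmf. destruct (j <=? k)%nat; [|lra].
  pose proof (binom_n_k_pos n k Hk). apply Rmult_le_pos; [apply Rmult_le_pos; apply pos_INR|].
  left. apply Rinv_0_lt_compat. auto.
Qed.

Lemma pmf_out n i k j : (k < j)%nat -> hyp_pmf n i k j = 0.
Proof. intros H. unfold hyp_pmf. rewrite (proj2 (Nat.leb_gt j k) H). reflexivity. Qed.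

Lemma pmf_sum n i k : (i <= n)%nat -> (k <= n)%nat -> sum_f_R0 (hyp_pmf n i k) k = 1.
Proof.
  intros Hi Hk. pose proof (binom_n_k_pos n k Hk).
  rewrite (sum_eq _ (fun j => INR (binom i j) * INR (binom (n - i) (k - j)) * / INR (binom n k))).
  - rewrite <- (scal_sum (fun j => INR (binom i j) * INR (binom (n - i) (k - j)))). 
    rewrite vandermonde. replace (i + (n - i))%nat with n by lia. field. lra.
  - intros j Hj. unfold hyp_pmf. rewrite (proj2 (Nat.leb_le j k) Hj). reflexivity.
Qed.

Lemma pmf_rec n i k j : (i <= n)%nat -> (k <= n)%nat ->
  INR (S j) * (INR n - INR i - INR k + INR (S j)) * hyp_pmf n i k (S j)
  = (INR i - INR j) * (INR k - INR j) * hyp_pmf n i k j.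
Proof.
  intros Hi Hk. pose proof (binom_n_k_pos n k Hk).
  destruct (le_lt_dec k j) as [Hkj|Hjk].
  - rewrite (pmf_out n i k (S j)) by lia.
    destruct (Nat.eq_dec j k) as [->|Hne]. ring.
    rewrite (pmf_out n i k j) by lia. ring.
  - unfold hyp_pmf. rewrite (proj2 (Nat.leb_le (S j) k) Hjk), (proj2 (Nat.leb_le j k) ltac:(lia)).
    set (r := (k - S j)%nat).
    replace (k - j)%nat with (S r) by (unfold r; lia).
    pose proof (absorb i j) as H1. pose proof (absorb (n - i) r) as H2.
    rewrite minus_INR in H2 by lia.
    assert (Hr: INR r = INR k - INR (S j)) by (unfold r; rewrite minus_INR by lia; ring).
    rewrite Hr in H2.
    replace (INR (S j) * (INR n - INR i - INR k + INR (S j)) *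
      (INR (binom i (S j)) * INR (binom (n - i) r) / INR (binom n k)))
      with ((INR (S j) * INR (binom i (S j))) * ((INR n - INR i - (INR k - INR (S j))) * INR (binom (n - i) r)) / INR (binom n k)) by (field; lra).
    rewrite H1, <- H2.
    assert (Hr2: INR (S r) = INR k - INR j) by (rewrite S_INR, Hr, S_INR; ring).
    rewrite Hr2. field. lra.
Qed.
Lemma psi_id n i k : (1 <= n)%nat -> (i <= n)%nat -> (k <= n)%nat -> forall j,
  tl k j (fun l => (INR l - INR i * INR k / INR n) * hyp_pmf n i k l) =
  INR j * (INR n - INR i - INR k + INR j) * hyp_pmf n i k j / INR n.
Proof.
  intros Hn Hi Hk. assert (Hn0: INR n > 0) by (apply lt_0_INR; lia).
  apply (down_ind k).
  - intros j Hj. rewrite tl_zero by lia. rewrite pmf_out by lia. field. lra.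
  - intros j Hj IH. rewrite tl_step, (proj2 (Nat.leb_le j k) Hj), IH.
    rewrite (pmf_rec n i k j Hi Hk). field. lra.
Qed.

Lemma mean_eq n i k : (1 <= n)%nat -> (i <= n)%nat -> (k <= n)%nat ->
  hyp_mean n i k = INR i * INR k / INR n.
Proof.
  intros Hn Hi Hk. pose proof (psi_id n i k Hn Hi Hk 0%nat) as H0.
  rewrite tl_0 in H0. simpl INR in H0.
  set (mu0 := INR i * INR k / INR n) in *.
  assert (E: sum_f_R0 (fun l => (INR l - mu0) * hyp_pmf n i k l) k
             = hyp_mean n i k - mu0 * sum_f_R0 (hyp_pmf n i k) k).
  { rewrite <- !tl_0.
    rewrite (tl_ext _ _ _ (fun l => 1 * (INR l * hyp_pmf n i k l) + (-mu0) * hyp_pmf n i k l + 0 * hyp_pmf n i k l)) by (intros; ring).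
    rewrite tl_lin. unfold hyp_mean. rewrite !tl_0. ring. }
  rewrite pmf_sum in E by auto. assert (Hn0: INR n > 0) by (apply lt_0_INR; lia).
  rewrite H0 in E. unfold Rdiv in E. lra.
Qed.

Lemma E2_id n i k : (2 <= n)%nat -> (i <= n)%nat -> (k <= n)%nat -> forall j,
  tl k j (fun l => (INR l - hyp_mean n i k) ^ 2 * hyp_pmf n i k l) =
  hyp_mean n i k * (hyp_mean n i k + (INR n - INR i - INR k)) / (INR n - 1) * tl k j (hyp_pmf n i k)
  + tl k j (fun l => (INR l - hyp_mean n i k) * hyp_pmf n i k l) *
    ((INR n * (INR j - hyp_mean n i k - 1) + 2 * hyp_mean n i k + (INR n - INR i - INR k)) / (INR n - 1)).
Proof.
  intros Hn Hi Hk. assert (Hn0: INR n > 1).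
  { replace 1 with (INR 1) by reflexivity. apply lt_INR. lia. }
  rewrite (mean_eq n i k) by (auto; lia).
  apply (down_ind k).
  - intros j Hj. rewrite !tl_zero by lia. ring.
  - intros j Hj IH. rewrite !(tl_step k j), (proj2 (Nat.leb_le j k) Hj), IH.
    rewrite (psi_id n i k ltac:(lia) Hi Hk (S j)).
    rewrite (pmf_rec n i k j Hi Hk). rewrite S_INR. field. lra.
Qed.

Lemma var_eq n i k : (2 <= n)%nat -> (i <= n)%nat -> (k <= n)%nat ->
  hyp_var n i k = hyp_mean n i k * (hyp_mean n i k + (INR n - INR i - INR k)) / (INR n - 1).
Proof.
  intros Hn Hi Hk. pose proof (E2_id n i k Hn Hi Hk 0%nat) as H.
  rewrite !tl_0 in H. rewrite pmf_sum in H by auto.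
  pose proof (psi_id n i k ltac:(lia) Hi Hk 0%nat) as H0. rewrite tl_0 in H0.
  rewrite <- (mean_eq n i k) in H0 by (auto; lia).
  rewrite H0 in H. simpl INR in H. unfold hyp_var. rewrite H. field.
  assert (INR n > 1). { replace 1 with (INR 1) by reflexivity. apply lt_INR. lia. }
  lra.
Qed.
Definition S2 (x:R) := x*(x+1)*(2*x+1)/6.
Definition GG (J t : R) := (t + J - 1) * J^2 - S2 (t - 1) + S2 (-J).
Definition clamp (J x : R) := Rmax (1 - J) (Rmin x J).
Definition FF (J c : nat) (l : nat) := GG (INR J) (clamp (INR J) (INR l - INR c)).

Lemma GG_step J t : GG J (t+1) - GG J t = J^2 - t^2.
Proof. unfold GG, S2. field. Qed.

Lemma GG_mono J a b : 1 <= J -> 1 - J <= a -> a <= b -> b <= J -> GG J a <= GG J b.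
Proof.
  intros HJ Ha Hab Hb.
  assert (E: GG J b - GG J a = (b - a) * (J^2 - (2*((a-1)^2 + (a-1)*(b-1) + (b-1)^2) + 3*((a-1)+(b-1)) + 1)/6))
    by (unfold GG, S2; field).
  assert (HA: (a-1)^2 + (a-1) <= J^2 - J) by nra.
  assert (HB: (b-1)^2 + (b-1) <= J^2 - J) by nra.
  assert (HC: 2*((a-1)^2 + (a-1)*(b-1) + (b-1)^2) <= 3*((a-1)^2 + (b-1)^2)) by nra.
  assert (0 <= (J^2 - (2*((a-1)^2 + (a-1)*(b-1) + (b-1)^2) + 3*((a-1)+(b-1)) + 1)/6)) by lra.
  assert (0 <= (b - a) * (J^2 - (2*((a-1)^2 + (a-1)*(b-1) + (b-1)^2) + 3*((a-1)+(b-1)) + 1)/6)).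
  { apply Rmult_le_pos; lra. }
  lra.
Qed.

Lemma clamp_range J x : 1 <= J -> 1 - J <= clamp J x <= J.
Proof.
  intros HJ. unfold clamp. split.
  - apply Rmax_l.
  - apply Rmax_lub; [lra|apply Rmin_r].
Qed.

Lemma bump J c l : (1 <= J)%nat ->
  0 <= FF J c (S l) - FF J c l /\ INR J ^ 2 - (FF J c (S l) - FF J c l) <= (INR l - INR c) ^ 2.
Proof.
  intros HJ. assert (HJr: 1 <= INR J) by (replace 1 with (INR 1) by reflexivity; apply le_INR; lia).
  unfold FF. rewrite S_INR.
  replace (INR l + 1 - INR c) with ((INR l - INR c) + 1) by ring.
  set (x := INR l - INR c).
  assert (Hl: INR l >= 0) by (apply Rle_ge, pos_INR).
  destruct (le_lt_dec (l + J) c) as [H1|H1].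
  - assert (Hx: INR (l + J) <= INR c) by (apply le_INR; auto). rewrite plus_INR in Hx.
    unfold clamp. rewrite (Rmin_left x) by (unfold x; lra). rewrite (Rmin_left (x+1)) by (unfold x; lra).
    rewrite (Rmax_left _ x) by (unfold x; lra). rewrite (Rmax_left _ (x+1)) by (unfold x; lra).
    split; [lra|]. unfold x. nra.
  - destruct (le_lt_dec (c + J) l) as [H2|H2].
    + assert (Hx: INR (c + J) <= INR l) by (apply le_INR; auto). rewrite plus_INR in Hx.
      unfold clamp. rewrite (Rmin_right x) by (unfold x; lra). rewrite (Rmin_right (x+1)) by (unfold x; lra).
      rewrite (Rmax_right _ (INR J)) by lra.
      split; [lra|]. unfold x. nra.
    + assert (Hx1: INR (c + 1) <= INR (l + J)) by (apply le_INR; lia).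
      assert (Hx2: INR (l + 1) <= INR (c + J)) by (apply le_INR; lia).
      rewrite !plus_INR in Hx1, Hx2. simpl INR in Hx1, Hx2.
      unfold clamp. rewrite (Rmin_left x) by (unfold x; lra). rewrite (Rmin_left (x+1)) by (unfold x; lra).
      rewrite (Rmax_right _ x) by (unfold x; lra). rewrite (Rmax_right _ (x+1)) by (unfold x; lra).
      rewrite GG_step. split; [|lra].
      assert (-INR J <= x <= INR J) by (unfold x; lra). nra.
Qed.

Lemma telescope (F : nat -> R) N : sum_f_R0 (fun l => F (S l) - F l) N = F (S N) - F 0%nat.
Proof. induction N; simpl; [ring|]. rewrite IHN. ring. Qed.

Lemma FF_total J c N : (1 <= J)%nat ->
  FF J c (S N) - FF J c 0 <= INR J * (4 * INR J ^ 2 - 1) / 3.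
Proof.
  intros HJ. assert (HJr: 1 <= INR J) by (replace 1 with (INR 1) by reflexivity; apply le_INR; lia).
  unfold FF.
  destruct (clamp_range (INR J) (INR (S N) - INR c) HJr).
  destruct (clamp_range (INR J) (INR 0 - INR c) HJr).
  assert (GG (INR J) (clamp (INR J) (INR (S N) - INR c)) <= GG (INR J) (INR J)) by (apply GG_mono; lra).
  assert (GG (INR J) (1 - INR J) <= GG (INR J) (clamp (INR J) (INR 0 - INR c))) by (apply GG_mono; lra).
  assert (GG (INR J) (INR J) - GG (INR J) (1 - INR J) = INR J * (4 * INR J ^ 2 - 1) / 3) by (unfold GG, S2; field).
  lra.
Qed.

Lemma pmax_bound (p : nat -> R) (N c J : nat) (P : R) :
  (1 <= J)%nat -> (forall l, 0 <= p l) -> (forall l, p l <= P) ->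
  INR J ^ 2 * sum_f_R0 p N - P * (INR J * (4 * INR J ^ 2 - 1) / 3)
  <= sum_f_R0 (fun l => p l * (INR l - INR c) ^ 2) N.
Proof.
  intros HJ Hp HP.
  assert (HP0: 0 <= P) by (specialize (Hp 0%nat); specialize (HP 0%nat); lra).
  apply Rle_trans with (sum_f_R0 (fun l => INR J ^ 2 * p l + (- P) * (FF J c (S l) - FF J c l) + 0 * p l) N).
  - rewrite <- !tl_0, tl_lin, !tl_0, telescope.
    pose proof (FF_total J c N HJ). nra.
  - apply sum_Rle. intros l _. destruct (bump J c l HJ) as [B1 B2].
    specialize (Hp l). specialize (HP l). nra.
Qed.
Lemma cs_tl N j (p x : nat -> R) : (forall l, 0 <= p l) -> 0 < tl N j p ->
  (tl N j (fun l => x l * p l))^2 <= tl N j p * tl N j (fun l => x l ^ 2 * p l).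
Proof.
  intros Hp HA.
  set (A := tl N j p). set (B := tl N j (fun l => x l * p l)). set (C := tl N j (fun l => x l ^ 2 * p l)).
  set (t := B / A).
  assert (H: 0 <= tl N j (fun l => 1 * (x l ^ 2 * p l) + (-2 * t) * (x l * p l) + (t^2) * p l)).
  { apply tl_nonneg. intros l. specialize (Hp l).
    replace (1 * (x l ^ 2 * p l) + (-2 * t) * (x l * p l) + (t^2) * p l) with (p l * (x l - t)^2) by ring.
    apply Rmult_le_pos; [auto|apply pow2_ge_0]. }
  rewrite tl_lin in H. fold A B C in H. assert (HA2: 0 < A) by exact HA. clearbody A B C.
  assert (H2: 0 <= A * (1 * C + -2 * t * B + t ^ 2 * A)) by (apply Rmult_le_pos; lra).
  replace (A * (1 * C + -2 * t * B + t ^ 2 * A)) with (A * C - B^2) in H2 by (unfold t; field; lra).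
  lra.
Qed.

Lemma ceil_ex (x : R) : 0 < x -> exists m : nat, INR m - 1 < x <= INR m.
Proof.
  intros Hx. destruct (archimed x) as [H1 H2].
  assert (Hz: (0 < up x)%Z) by (apply lt_IZR; simpl; lra).
  destruct (Rle_lt_or_eq_dec (IZR (up x) - 1) x ltac:(lra)) as [H3|H3].
  - exists (Z.to_nat (up x)). rewrite INR_IZR_INZ, Z2Nat.id by lia. lra.
  - exists (Z.to_nat (up x - 1)). rewrite INR_IZR_INZ, Z2Nat.id by lia. rewrite minus_IZR. simpl. lra.
Qed.

Lemma unimodal n i k m : (1 <= n)%nat -> (i <= n)%nat -> (k <= n)%nat -> (1 <= m)%nat ->
  INR m - 1 < INR i * INR k / INR n -> INR i * INR k / INR n <= INR m ->
  INR n - INR i - INR k + INR i * INR k / INR n > 0 ->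
  2 * (INR i * INR k / INR n) <= INR i + INR k ->
  forall l, hyp_pmf n i k l <= Rmax (hyp_pmf n i k (m - 1)) (hyp_pmf n i k m).
Proof.
  intros Hn Hi Hk Hm Hm1 Hm2 Hd Hik.
  assert (Hn0: INR n > 0) by (apply lt_0_INR; lia).
  set (mu := INR i * INR k / INR n) in *.
  assert (Hmun: mu * INR n = INR i * INR k) by (unfold mu; field; lra).
  assert (Hmu0: 0 <= mu) by (unfold mu; apply Rmult_le_pos; [apply Rmult_le_pos; apply pos_INR|left; apply Rinv_0_lt_compat; lra]).
  assert (Hdec: forall l, (m <= l)%nat -> hyp_pmf n i k (S l) <= hyp_pmf n i k l).
  { intros l Hl. pose proof (pmf_rec n i k l Hi Hk) as R.
    assert (Hl': INR m <= INR l) by (apply le_INR; auto).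
    rewrite S_INR in R.
    set (D := (INR l + 1) * (INR n - INR i - INR k + (INR l + 1))) in R.
    assert (HD: D > 0) by (unfold D; pose proof (pos_INR l); apply Rmult_lt_0_compat; lra).
    assert (Hc: (INR i - INR l) * (INR k - INR l) <= D).
    { unfold D. assert (0 <= (INR l - mu) * (INR n + 2)) by (apply Rmult_le_pos; lra). nra. }
    pose proof (pmf_nonneg n i k l Hk) as P0.
    assert (D * hyp_pmf n i k (S l) <= D * hyp_pmf n i k l).
    { rewrite R. apply Rmult_le_compat_r; auto. }
    apply Rmult_le_reg_l with D; auto. }
  assert (Hinc: forall l, (S l <= m - 1)%nat -> hyp_pmf n i k l <= hyp_pmf n i k (S l)).
  { intros l Hl.
    destruct (le_lt_dec (k - l) (n - i)) as [Hkl|Hkl].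
    2:{ unfold hyp_pmf at 1. rewrite (binom_gt (n - i) (k - l)) by lia. simpl INR.
        destruct (l <=? k)%nat; [|apply pmf_nonneg; auto].
        rewrite Rmult_0_r. unfold Rdiv. rewrite Rmult_0_l. apply pmf_nonneg; auto. }
    destruct (le_lt_dec l k) as [Hlk|Hlk].
    2:{ rewrite pmf_out by lia. apply pmf_nonneg; auto. }
    pose proof (pmf_rec n i k l Hi Hk) as R.
    assert (Hl': INR (S l) <= INR (m - 1)) by (apply le_INR; auto).
    rewrite minus_INR in Hl' by lia. change (INR 1) with 1 in Hl'.
    assert (Hkl': INR (k - l) <= INR (n - i)) by (apply le_INR; auto).
    rewrite !minus_INR in Hkl' by lia.
    rewrite S_INR in R, Hl'.
    set (D := (INR l + 1) * (INR n - INR i - INR k + (INR l + 1))) in R.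
    assert (HD: D > 0) by (unfold D; pose proof (pos_INR l); apply Rmult_lt_0_compat; lra).
    assert (Hc: D <= (INR i - INR l) * (INR k - INR l)).
    { unfold D. assert (0 <= (mu - (INR l + 1)) * (INR n + 2)) by (apply Rmult_le_pos; lra). nra. }
    pose proof (pmf_nonneg n i k l Hk) as P0.
    assert (D * hyp_pmf n i k l <= D * hyp_pmf n i k (S l)).
    { rewrite R. apply Rmult_le_compat_r; auto. }
    apply Rmult_le_reg_l with D; auto. }
  intros l.
  destruct (le_lt_dec m l) as [Hml|Hml].
  - apply Rle_trans with (hyp_pmf n i k m); [|apply Rmax_r].
    replace l with (m + (l - m))%nat by lia. generalize (l - m)%nat. intros d.
    induction d. rewrite Nat.add_0_r. lra.
    replace (m + S d)%nat with (S (m + d)) by lia. eapply Rle_trans; [apply Hdec; lia|auto].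
  - apply Rle_trans with (hyp_pmf n i k (m - 1)); [|apply Rmax_l].
    replace l with (m - 1 - (m - 1 - l))%nat by lia.
    assert (Hd': (m - 1 - l <= m - 1)%nat) by lia. revert Hd'. generalize (m - 1 - l)%nat. intros d.
    induction d; intros Hd'. rewrite Nat.sub_0_r. lra.
    eapply Rle_trans; [apply Hinc; lia|].
    replace (S (m - 1 - S d)) with (m - 1 - d)%nat by lia. apply IHd; lia.
Qed.
Lemma quad_bound A psi var : 0 < A -> 0 <= psi -> 0 <= var ->
  psi ^ 2 <= A * (var * A + psi) -> 2 * psi <= A * (1 + sqrt (1 + 4 * var)).
Proof.
  intros HA Hp Hv H.
  set (R := sqrt (1 + 4 * var)).
  assert (HR: R * R = 1 + 4 * var) by (apply sqrt_sqrt; lra).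
  assert (HR0: 0 <= R) by apply sqrt_pos.
  destruct (Rle_lt_dec (2 * psi) (A * (1 + R))) as [H1|H1]; auto.
  exfalso.
  assert (H2: A * R < 2 * psi - A) by lra.
  assert (H3: (A * R) * (A * R) < (2 * psi - A) * (2 * psi - A)).
  { assert (0 <= A * R) by (apply Rmult_le_pos; lra). nra. }
  nra.
Qed.

Lemma key_small (sg P : R) : sg * sg >= 1/3 -> 0 <= sg -> sg <= 1 ->
  10 * P >= 15/4 - sg * sg -> 2 * sg * P >= 193/1000 * (1 + sg).
Proof.
  intros H1 H2 H3 H4.
  assert (Hs: sg >= 1/2) by nra.
  assert (sg * (sg * sg) <= sg) by nra.
  nra.
Qed.

Lemma key_large (sg P J : R) : sg >= 1 -> J - 1 < 7/4 * sg -> 7/4 * sg <= J -> 0 <= P ->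
  J ^ 2 - P * (J * (4 * J ^ 2 - 1) / 3) <= sg * sg + 1/4 -> sg * P >= 193/1000.
Proof.
  intros H1 H2 H3 HP H4.
  set (u := J - 7/4 * sg).
  assert (Hu: 0 <= u < 1) by (unfold u; lra).
  replace J with (7/4 * sg + u) in * by (unfold u; ring).
  assert (HJ: 0 < (7/4 * sg + u) * (4 * (7/4 * sg + u) ^ 2 - 1)).
  { apply Rmult_lt_0_compat; [lra|]. nra. }
  assert (H5: 3 * sg * ((7/4*sg+u)^2 - sg*sg - 1/4) >= 193/1000 * ((7/4 * sg + u) * (4 * (7/4 * sg + u) ^ 2 - 1))).
  { assert (E1: 0 <= sg * u * (sg - u)) by (apply Rmult_le_pos; [apply Rmult_le_pos|]; lra).
    assert (E2: 0 <= u * (sg * sg - u * u)) by (apply Rmult_le_pos; nra).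
    assert (E3: 0 <= sg * (sg * sg - 1)) by (apply Rmult_le_pos; nra).
    assert (E4: 0 <= sg * sg * u) by (apply Rmult_le_pos; nra).
    nra. }
  assert (H6: sg * P * ((7/4 * sg + u) * (4 * (7/4 * sg + u) ^ 2 - 1)) >= 3 * sg * ((7/4*sg+u)^2 - sg*sg - 1/4)).
  { nra. }
  nra.
Qed.
Lemma final_real (A psi var P nn kk : R) :
  nn >= 7 -> 1 <= kk -> kk < nn -> var >= 1/3 -> 0 < A -> 0 <= psi -> 0 <= P ->
  2 * psi <= A * (1 + sqrt (1 + 4 * var)) ->
  psi * nn >= (nn - 1) * var * P ->
  (forall J : nat, (1 <= J)%nat -> INR J ^ 2 - P * (INR J * (4 * INR J ^ 2 - 1) / 3) <= var + 1/4) ->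
  A >= exp (-(1/8)) / (4 * sqrt 2) * sqrt ((nn - 1) / nn) *
       (sqrt var / (1 + sqrt (1 + (nn - 1) / (nn - kk) * var))).
Proof.
  intros Hn Hk1 Hk2 Hv HA Hpsi HP Hq Hpv HJ.
  set (sg := sqrt var).
  assert (Hsg: sg * sg = var) by (apply sqrt_sqrt; lra).
  assert (Hsg0: 0 <= sg) by apply sqrt_pos.
  set (s := sqrt ((nn - 1) / nn)).
  assert (Hs2: s * s = (nn - 1) / nn) by (apply sqrt_sqrt; unfold Rdiv; apply Rmult_le_pos; [lra|left; apply Rinv_0_lt_compat; lra]).
  assert (Hs0: 0 <= s) by apply sqrt_pos.
  assert (Hs67: (nn - 1) / nn - 6/7 = (nn - 7) / (7 * nn)) by (field; lra).
  assert (Hs67b: 0 <= (nn - 7) / (7 * nn)) by (unfold Rdiv; apply Rmult_le_pos; [lra|left; apply Rinv_0_lt_compat; lra]).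
  assert (Hs1: (nn - 1) / nn <= 1) by (apply Rmult_le_reg_r with nn; [lra|]; unfold Rdiv; rewrite Rmult_assoc, Rinv_l by lra; lra).
  assert (Hsl: s >= 92/100) by nra.
  assert (Hsu: s <= 1) by nra.
  set (R1 := sqrt (1 + var)).
  assert (HR1a: 1 <= R1) by (unfold R1; apply Rle_trans with (sqrt 1); [rewrite sqrt_1; lra|apply sqrt_le_1_alt; lra]).
  assert (HR1b: sg <= R1) by (unfold R1, sg; apply sqrt_le_1_alt; lra).
  set (c := (nn - 1) / (nn - kk)).
  assert (Hc: 1 <= c) by (unfold c; apply Rmult_le_reg_r with (nn - kk); [lra|]; unfold Rdiv; rewrite Rmult_assoc, Rinv_l by lra; lra).
  set (Rc := sqrt (1 + c * var)).
  assert (HRc: R1 <= Rc) by (unfold R1, Rc; apply sqrt_le_1_alt; nra).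
  set (R4 := sqrt (1 + 4 * var)).
  assert (HR4: R4 <= 1 + 2 * sg).
  { unfold R4. rewrite <- (sqrt_square (1 + 2 * sg)) by lra. apply sqrt_le_1_alt. nra. }
  assert (HR40: 0 <= R4) by apply sqrt_pos.
  set (E := exp (-(1/8))).
  assert (HE: 0 < E <= 1).
  { split. apply exp_pos. unfold E. assert (HH: exp (-(1/8)) < exp 0) by (apply exp_increasing; lra). rewrite exp_0 in HH. lra. }
  assert (Hsq2: sqrt 2 * sqrt 2 = 2) by (apply sqrt_sqrt; lra).
  assert (Hsq20: 0 <= sqrt 2) by apply sqrt_pos.
  assert (Hsq2b: sqrt 2 >= 1414/1000) by nra.
  set (K := E / (4 * sqrt 2)).
  assert (HK: 0 < K <= 1000 / 5656).
  { unfold K. split. apply Rdiv_lt_0_compat; lra.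
    apply Rmult_le_reg_r with (4 * sqrt 2); [lra|]. unfold Rdiv. rewrite Rmult_assoc, Rinv_l by lra. nra. }
  assert (Hkey: sg * P * (1 + R1) >= 193/1000 * (1 + sg)).
  { destruct (Rle_lt_dec sg 1) as [Hs|Hs].
    - pose proof (HJ 2%nat ltac:(lia)) as H2. simpl INR in H2.
      assert (H3: 2 * sg * P >= 193/1000 * (1 + sg)).
      { apply key_small; nra. }
      assert (0 <= sg * P) by (apply Rmult_le_pos; lra). nra.
    - destruct (ceil_ex (7/4 * sg) ltac:(lra)) as [J [HJ1 HJ2]].
      assert (HJ0: (1 <= J)%nat) by (destruct J; [simpl in HJ2; lra|lia]).
      pose proof (HJ J HJ0) as H2. rewrite <- Hsg in H2.
      assert (H3: sg * P >= 193/1000) by (apply (key_large sg P (INR J)); lra).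
      nra. }
  assert (Hpsi2: psi >= s * s * (sg * sg) * P).
  { rewrite Hs2, Hsg. apply Rle_ge. apply Rmult_le_reg_r with nn; [lra|].
    unfold Rdiv. replace ((nn - 1) * / nn * var * P * nn) with ((nn - 1) * var * P) by (field; lra). lra. }
  assert (HA1: A * (1 + R1) * (2 * (1 + sg)) >= 193/1000 * 2 * (s * s) * sg * (1 + sg)).
  { assert (A * (1 + R1) * (1 + R4) <= A * (1 + R1) * (2 * (1 + sg))).
    { apply Rmult_le_compat_l; [apply Rmult_le_pos; lra|lra]. }
    assert (A * (1 + R1) * (1 + R4) >= 2 * psi * (1 + R1)).
    { fold R4 in Hq. replace (A * (1 + R1) * (1 + R4)) with ((A * (1 + R4)) * (1 + R1)) by ring.
      apply Rle_ge, Rmult_le_compat_r; lra. }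
    assert (2 * psi * (1 + R1) >= 2 * (s * s) * sg * (sg * P * (1 + R1))).
    { replace (2 * (s * s) * sg * (sg * P * (1 + R1))) with (2 * (s * s * (sg * sg) * P) * (1 + R1)) by ring.
      apply Rle_ge, Rmult_le_compat_r; lra. }
    assert (2 * (s * s) * sg * (sg * P * (1 + R1)) >= 2 * (s * s) * sg * (193/1000 * (1 + sg))).
    { apply Rle_ge. apply Rmult_le_compat_l. apply Rmult_le_pos; [nra|lra]. lra. }
    nra. }
  assert (HA2: A * (1 + R1) >= 193/1000 * (s * s) * sg).
  { apply Rle_ge. apply Rmult_le_reg_r with (2 * (1 + sg)); [lra|]. nra. }
  assert (HA3: A * (1 + R1) >= K * s * sg).
  { assert (193/1000 * s >= K) by lra.
    assert (0 <= s * sg) by (apply Rmult_le_pos; lra). nra. }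
  fold E K s sg R1 c Rc.
  apply Rle_ge.
  apply Rle_trans with (K * s * (sg / (1 + R1))).
  - apply Rmult_le_compat_l. apply Rmult_le_pos; lra.
    unfold Rdiv. apply Rmult_le_compat_l; [lra|]. apply Rinv_le_contravar; lra.
  - replace (K * s * (sg / (1 + R1))) with ((K * s * sg) / (1 + R1)) by (field; lra).
    apply Rmult_le_reg_r with (1 + R1); [lra|]. unfold Rdiv. rewrite Rmult_assoc, Rinv_l by lra. lra.
Qed.
Theorem theorem2 (n i k : nat) :
  (1 <= n)%nat -> (1 <= i <= n)%nat -> (1 <= k <= n)%nat ->
  1 <= hyp_mean n i k ->
  hyp_mean n i k <= INR (Nat.min i k) - 2 ->
  INR (n - i) * INR (n - k) / INR n > 1 ->
  hyp_prob_ge_mean n i k >=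
    exp (-(1/8)) / (4 * sqrt 2) * sqrt ((INR n - 1) / INR n) *
    (sqrt (hyp_var n i k) /
     (1 + sqrt (1 + (INR n - 1) / (INR n - INR k) * hyp_var n i k))).
Proof.
  intros Hn [Hi1 Hin] [Hk1 Hkn] Hmu1 Hmu2 Hd.
  assert (Hn0: INR n > 0) by (apply lt_0_INR; lia).
  pose proof (mean_eq n i k Hn Hin Hkn) as Hmu.
  assert (Hmin1: INR (Nat.min i k) <= INR i) by (apply le_INR; lia).
  assert (Hmin2: INR (Nat.min i k) <= INR k) by (apply le_INR; lia).
  rewrite !minus_INR in Hd by lia.
  assert (Hdd: INR n - INR i - INR k + hyp_mean n i k = (INR n - INR i) * (INR n - INR k) / INR n)
    by (rewrite Hmu; field; lra).
  assert (Hn6: INR n > 6) by lra.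
  assert (Hn7: (7 <= n)%nat).
  { destruct (le_lt_dec 7 n) as [H|H]; auto. exfalso.
    assert (INR n <= INR 6) by (apply le_INR; lia). simpl in H0. lra. }
  assert (Hn7r: INR n >= 7) by (apply Rle_ge; replace 7 with (INR 7) by (simpl; ring); apply le_INR; lia).
  pose proof (var_eq n i k ltac:(lia) Hin Hkn) as Hvar.
  assert (Hmun: hyp_mean n i k * INR n = INR i * INR k) by (rewrite Hmu; field; lra).
  destruct (ceil_ex (hyp_mean n i k) ltac:(lra)) as [m [Hm1 Hm2]].
  assert (Hm: (1 <= m)%nat) by (destruct m; [simpl in Hm2; lra|lia]).
  assert (Hmi: (m + 1 < i)%nat) by (apply INR_lt; rewrite plus_INR; simpl INR at 2; lra).
  assert (Hmk: (m + 1 < k)%nat) by (apply INR_lt; rewrite plus_INR; simpl INR at 2; lra).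
  assert (Hkim: (k + i <= n + m)%nat) by (apply INR_le; rewrite !plus_INR; lra).
  assert (HA: hyp_prob_ge_mean n i k = tl k m (hyp_pmf n i k)).
  { unfold hyp_prob_ge_mean, tl. apply sum_eq. intros l _.
    destruct (Rle_dec (hyp_mean n i k) (INR l)) as [H|H]; destruct (Nat.leb_spec m l) as [H'|H']; auto.
    - exfalso. assert (INR (S l) <= INR m) by (apply le_INR; lia). rewrite S_INR in H0. lra.
    - exfalso. apply H. assert (INR m <= INR l) by (apply le_INR; lia). lra. }
  assert (Hpm: 0 < hyp_pmf n i k m).
  { unfold hyp_pmf. rewrite (proj2 (Nat.leb_le m k)) by lia. pose proof (binom_n_k_pos n k Hkn).
    assert (0 < INR (binom i m)) by (apply lt_0_INR, binom_pos; lia).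
    assert (0 < INR (binom (n - i) (k - m))) by (apply lt_0_INR, binom_pos; lia).
    unfold Rdiv. apply Rmult_lt_0_compat; [apply Rmult_lt_0_compat|apply Rinv_0_lt_compat]; auto. }
  assert (HApos: hyp_pmf n i k m <= tl k m (hyp_pmf n i k)).
  { rewrite tl_step, (proj2 (Nat.leb_le m k)) by lia.
    pose proof (tl_nonneg k (S m) (hyp_pmf n i k) (fun l => pmf_nonneg n i k l Hkn)). lra. }
  pose proof (psi_id n i k Hn Hin Hkn m) as Hpsi. rewrite <- Hmu in Hpsi.
  pose proof (pmf_rec n i k (m - 1) Hin Hkn) as Hrec.
  replace (S (m - 1)) with m in Hrec by lia. rewrite minus_INR in Hrec by lia.
  change (INR 1) with 1 in Hrec.
  pose proof (E2_id n i k ltac:(lia) Hin Hkn m) as HE2.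
  pose proof (cs_tl k m (hyp_pmf n i k) (fun l => INR l - hyp_mean n i k)
     (fun l => pmf_nonneg n i k l Hkn) ltac:(lra)) as HCS. cbv beta in HCS.
  pose proof (unimodal n i k m Hn Hin Hkn Hm ltac:(rewrite <- Hmu; lra) ltac:(rewrite <- Hmu; lra)
     ltac:(rewrite <- Hmu; lra) ltac:(rewrite <- Hmu; lra)) as Huni.
  assert (Hcen: exists c : nat, (hyp_mean n i k - INR c) ^ 2 <= 1/4).
  { destruct (Rle_dec (hyp_mean n i k) (INR m - 1/2)) as [H|H].
    - exists (m - 1)%nat. rewrite minus_INR by lia. simpl INR. nra.
    - exists m. nra. }
  destruct Hcen as [c Hc].
  assert (Hsec: sum_f_R0 (fun l => hyp_pmf n i k l * (INR l - INR c) ^ 2) k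
                = hyp_var n i k + (hyp_mean n i k - INR c) ^ 2).
  { rewrite <- tl_0.
    rewrite (tl_ext _ _ _ (fun l => 1 * ((INR l - hyp_mean n i k) ^ 2 * hyp_pmf n i k l)
        + (2 * (hyp_mean n i k - INR c)) * ((INR l - hyp_mean n i k) * hyp_pmf n i k l)
        + ((hyp_mean n i k - INR c) ^ 2) * hyp_pmf n i k l)) by (intros; ring).
    rewrite tl_lin. unfold hyp_var. rewrite !tl_0, pmf_sum by auto.
    pose proof (psi_id n i k Hn Hin Hkn 0%nat) as H0. rewrite tl_0, <- Hmu in H0.
    rewrite H0. simpl INR. field. lra. }
  assert (HJ: forall J : nat, (1 <= J)%nat ->
    INR J ^ 2 - Rmax (hyp_pmf n i k (m - 1)) (hyp_pmf n i k m) * (INR J * (4 * INR J ^ 2 - 1) / 3)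
      <= hyp_var n i k + 1/4).
  { intros J HJ1. pose proof (pmax_bound (hyp_pmf n i k) k c J _ HJ1 (fun l => pmf_nonneg n i k l Hkn) Huni) as H.
    rewrite pmf_sum in H by auto. lra. }
  rewrite HA.
  set (mu := hyp_mean n i k) in *.
  set (var := hyp_var n i k) in *.
  set (P := Rmax (hyp_pmf n i k (m - 1)) (hyp_pmf n i k m)) in *.
  set (A := tl k m (hyp_pmf n i k)) in *.
  set (psi := tl k m (fun l => (INR l - mu) * hyp_pmf n i k l)) in *.
  set (E2 := tl k m (fun l => (INR l - mu) ^ 2 * hyp_pmf n i k l)) in *.
  set (q := INR n - INR i - INR k) in *.
  assert (Had: mu * (mu + q) = (INR i - mu) * (INR k - mu)) by (unfold q; nra).
  assert (Hpsi0: 0 <= psi).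
  { rewrite Hpsi. assert (1 <= INR m) by lra. unfold Rdiv.
    apply Rmult_le_pos; [|left; apply Rinv_0_lt_compat; lra].
    apply Rmult_le_pos; [apply Rmult_le_pos|]; unfold q in *; lra. }
  assert (Hvar0: var >= 1/3).
  { rewrite Hvar.
    assert (Hbc: mu * (mu + q) >= 4) by nra.
    assert ((mu - 1) * (mu + q - 1) >= 0) by (apply Rle_ge, Rmult_le_pos; unfold q in *; lra).
    assert ((INR i - mu - 2) * (INR k - mu - 2) >= 0) by (apply Rle_ge, Rmult_le_pos; lra).
    apply Rle_ge. apply Rmult_le_reg_r with (INR n - 1); [lra|].
    replace (mu * (mu + q) / (INR n - 1) * (INR n - 1)) with (mu * (mu + q)) by (field; lra).
    unfold q in *. nra. }
  assert (Hth: (INR n * (INR m - mu - 1) + 2 * mu + q) / (INR n - 1) <= 1).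
  { apply Rmult_le_reg_r with (INR n - 1); [lra|].
    replace ((INR n * (INR m - mu - 1) + 2 * mu + q) / (INR n - 1) * (INR n - 1))
      with (INR n * (INR m - mu - 1) + 2 * mu + q) by (field; lra).
    unfold q. nra. }
  assert (HAE: psi ^ 2 <= A * (var * A + psi)).
  { rewrite HE2, <- Hvar in HCS. 
    assert (psi * ((INR n * (INR m - mu - 1) + 2 * mu + q) / (INR n - 1)) <= psi) by nra.
    assert (0 < A) by lra. nra. }
  assert (Hkn2: INR k < INR n) by (unfold q in Hdd; lra).
  apply (final_real A psi var P); try lra.
  - apply Rle_trans with (hyp_pmf n i k m); [lra|apply Rmax_r].
  - apply quad_bound; lra.
  -
    assert (Hv1: (INR n - 1) * var = mu * (mu + q)) by (rewrite Hvar; field; lra).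
    unfold P. apply Rmax_case.
    + rewrite Rmult_comm with (r1 := (INR n - 1) * var) at 1. rewrite Hv1.
      assert (psi * INR n = (INR i - (INR m - 1)) * (INR k - (INR m - 1)) * hyp_pmf n i k (m - 1)).
      { rewrite Hpsi, <- Hrec. unfold q. field. lra. }
      rewrite H. rewrite Had. pose proof (pmf_nonneg n i k (m - 1) Hkn).
      assert ((INR i - mu) * (INR k - mu) <= (INR i - (INR m - 1)) * (INR k - (INR m - 1))) by nra.
      nra.
    + rewrite Rmult_comm with (r1 := (INR n - 1) * var) at 1. rewrite Hv1.
      assert (psi * INR n = INR m * (q + INR m) * hyp_pmf n i k m) by (rewrite Hpsi; unfold q; field; lra).
      rewrite H. assert (mu * (mu + q) <= INR m * (q + INR m)) by (unfold q in *; nra).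
      nra.
  - intros J HJ1. specialize (HJ J HJ1). lra.
Qed.
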